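(* Let $\Bbbk$ be a field, $\mathrm{Var}$ a variety of $\Bbbk$-algebras with one binary product defined by polylinear identities, $X$ a set, $\dot X$ a disjoint copy of $X$, $F=\mathrm{Var}\langle X\cup\dot X\rangle$, and $\varphi:F\to F$ the algebra homomorphism with $\varphi(x)=\varphi(\dot x)=x$ ($x\in X$). (1) Let $V\subseteq F$ be the span of all monomials of positive degree in $\dot X$, identified with $\text{tri-}\mathrm{Var}\langle X\rangle$ (operations $f\vdash g=\varphi(f)g$, $f\dashv g=f\varphi(g)$, $f\perp g=fg$, $\dot x\leftrightarrow x$). Let $S\subseteq V$ and $I=(S\cup\varphi(S))$ the ideal of $F$ generated by $S\cup\varphi(S)$. Then $I$ is $\varphi$-invariant, so $\varphi$ induces an endomorphism $\bar\varphi$ of $F/I$, and $F/I$ becomes a tri-algebra $(F/I)^{(3)}$ via $a\vdash b=\bar\varphi(a)b$, $a\dashv b=a\bar\varphi(b)$, $a\perp b=ab$; the tri-algebra $\text{tri-}\mathrm{Var}\langle X\mid S\rangle$ is isomorphic to the subalgebra of $(F/I)^{(3)}$ generated by the image of $\dot X$. (2) Similarly, let $V_2\subseteq F$ be the span of monomials of degree exactly $1$ in $\dot X$, identified with $\text{di-}\mathrm{Var}\langle X\rangle$ (operations $f\vdash g=\varphi(f)g$, $f\dashv g=f\varphi(g)$, $\dot x\leftrightarrow x$). For $S\subseteq V_2$ and $I=(S\cup\varphi(S))$, the di-algebra $\text{di-}\mathrm{Var}\langle X\mid S\rangle$ is isomorphic to the subalgebra of $F/I$ with operations $a\vdash b=\bar\varphi(a)b$,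 $a\dashv b=a\bar\varphi(b)$ generated by the image of $\dot X$.
   Context: Replication: for a polylinear $\Phi(x_1,\dots,x_n)$ in the free algebra with one binary operation $\mu$ and nonempty $H\subseteq\{1,\dots,n\}$, $\Phi_H$ is obtained by viewing each monomial as a binary tree, marking leaves $x_i$, $i\in H$, and replacing $\mu$ at each node by $\mu_S$, $S\subseteq\{1,2\}$ the set of branches containing a marked leaf (by $\mu_{\{1\}}$ if $S=\varnothing$). Write $\dashv=\mu_{\{1\}}$, $\vdash=\mu_{\{2\}}$, $\perp=\mu_{\{1,2\}}$. $\text{tri-}\mathrm{Var}$ is the variety of algebras with operations $\vdash,\dashv,\perp$ satisfying $(a* b)\vdash c=(a\star b)\vdash c$, $a\dashv(b* c)=a\dashv(b\star c)$ for all $*,\star\in\{\vdash,\dashv,\perp\}$, and $\Phi_H=0$ for every defining identity $\Phi$ of $\mathrm{Var}$ and nonempty $H$. $\text{di-}\mathrm{Var}$ is the variety of algebras with operations $\vdash,\dashv$ satisfying $(a\dashv b)\vdash c=(a\vdash b)\vdash c$, $a\dashv(b\vdash c)=a\dashv(b\dashv c)$, and $\Phi_{\{i\}}=0$ for every defining identity $\Phi$ of $\mathrm{Var}$ of degree $n$ and $1\le i\le n$. $\text{tri-}\mathrm{Var}\langle X\mid S\rangle$ (resp. $\text{di-}\mathrm{Var}\langle X\mid S\rangle$) denotes the quotient of the free tri- (resp. di-) algebra on $X$ by the ideal generated by $S$. The identifications of $V$ and $V_2$ with the free tri- and di-algebras on $X$ are established in the paper. *)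

(* Defs.v *)
From HB Require Import structures.
From mathcomp Require Import all_boot all_algebra.
Set Implicit Arguments. Unset Strict Implicit. Unset Printing Implicit Defensive.
Import GRing.Theory.
Local Open Scope ring_scope.

(* Binary trees = nonassociative monomials (bracketings) with leaves in L. *)
Inductive btree (L : Type) : Type :=
| BLeaf of L
| BNode of btree L & btree L.
Arguments BLeaf {L} _.
Arguments BNode {L} _ _.

Fixpoint leaves L (t : btree L) : seq L :=
  match t with BLeaf l => [:: l] | BNode t1 t2 => leaves t1 ++ leaves t2 end.

Fixpoint tev (A L : Type) (mul : A -> A -> A) (f : L -> A) (t : btree L) : A :=
  match t with BLeaf l => f l | BNode t1 t2 => mul (tev mul f t1) (tev mul f t2) end.

(* A (nonassociative) identity in variables x_0..x_{n-1}: a formal linear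
   combination of monomials. *)
Record pl_id (k : fieldType) := PlId {
  pl_n : nat;
  pl_terms : seq (k * btree 'I_pl_n) }.

Definition polylinear (k : fieldType) (Phi : pl_id k) : bool :=
  all (fun p => perm_eq (leaves p.2) (enum 'I_(pl_n Phi))) (pl_terms Phi).

Definition id_eval (k : fieldType) (A : lmodType k) (mul : A -> A -> A)
  (Phi : pl_id k) (a : 'I_(pl_n Phi) -> A) : A :=
  \sum_(p <- pl_terms Phi) p.1 *: tev mul a p.2.

Definition bilinear_mul (k : fieldType) (A : lmodType k) (mul : A -> A -> A) : Prop :=
  [/\ (forall a b c, mul (a + b) c = mul a c + mul b c),
      (forall a b c, mul a (b + c) = mul a b + mul a c),
      (forall (c : k) a b, mul (c *: a) b = c *: mul a b) &
      (forall (c : k) a b, mul a (c *: b) = c *: mul a b)].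

Definition in_var (k : fieldType) (J : Type) (Phi : J -> pl_id k)
  (A : lmodType k) (mul : A -> A -> A) : Prop :=
  forall j (a : 'I_(pl_n (Phi j)) -> A), @id_eval k A mul (Phi j) a = 0.

Definition is_lin (k : fieldType) (A B : lmodType k) (h : A -> B) : Prop :=
  forall (c : k) a b, h (c *: a + b) = c *: h a + h b.

Definition is_mult (k : fieldType) (A B : lmodType k) (mulA : A -> A -> A)
  (mulB : B -> B -> B) (h : A -> B) : Prop :=
  forall a b, h (mulA a b) = mulB (h a) (h b).

Definition is_free_var (k : fieldType) (J : Type) (Phi : J -> pl_id k)
  (Y : Type) (A : lmodType k) (mul : A -> A -> A) (gen : Y -> A) : Prop :=
  [/\ bilinear_mul mul, in_var Phi mul &
   forall (B : lmodType k) (mulB : B -> B -> B),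
     bilinear_mul mulB -> in_var Phi mulB ->
     forall f : Y -> B,
     exists h : A -> B,
       [/\ is_lin h, is_mult mul mulB h, (forall y, h (gen y) = f y) &
        forall h' : A -> B, is_lin h' -> is_mult mul mulB h' ->
          (forall y, h' (gen y) = f y) -> forall a, h' a = h a]].

Definition in_span (k : fieldType) (Y : Type) (A : lmodType k)
  (mul : A -> A -> A) (gen : Y -> A) (P : pred (btree Y)) (v : A) : Prop :=
  exists s : seq (k * btree Y),
    all (fun p => P p.2) s /\ v = \sum_(p <- s) p.1 *: tev mul gen p.2.

(* degree in the dotted variables (dotted copy = inr) *)
Definition dot_deg (X : Type) (t : btree (X + X)) : nat :=
  count (fun l : X + X => if l is inr _ then true else false) (leaves t).

Inductive op_ideal (k : fieldType) (A : lmodType k) (U : A -> Prop)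
  (Ops : (A -> A -> A) -> Prop) (G : A -> Prop) : A -> Prop :=
| oi_base a : G a -> op_ideal U Ops G a
| oi_zero : op_ideal U Ops G 0
| oi_add a b : op_ideal U Ops G a -> op_ideal U Ops G b -> op_ideal U Ops G (a + b)
| oi_scale (c : k) a : op_ideal U Ops G a -> op_ideal U Ops G (c *: a)
| oi_opl o a w : Ops o -> U a -> op_ideal U Ops G w -> op_ideal U Ops G (o a w)
| oi_opr o w a : Ops o -> op_ideal U Ops G w -> U a -> op_ideal U Ops G (o w a).

Definition ideal_gen (k : fieldType) (A : lmodType k) (mul : A -> A -> A)
  (G : A -> Prop) : A -> Prop :=
  op_ideal (fun _ => True) (fun o => o = mul) G.

Definition with_image (A : Type) (phi : A -> A) (S : A -> Prop) : A -> Prop :=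
  fun a => S a \/ exists s, S s /\ a = phi s.

Definition tri_ops (A : Type) (vd dl pp : A -> A -> A) : (A -> A -> A) -> Prop :=
  fun o => o = vd \/ o = dl \/ o = pp.

Definition di_ops (A : Type) (vd dl : A -> A -> A) : (A -> A -> A) -> Prop :=
  fun o => o = vd \/ o = dl.

(* Replication: evaluate a monomial where each node uses mu_S, S = set of
   branches containing a marked leaf (leaf i marked iff i \in H);
   mu_{1} = dl (-|), mu_{2} = vd (|-), mu_{1,2} = pp (perp), mu_{} = dl. *)
Fixpoint rep_ev (A : Type) (n : nat) (vd dl pp : A -> A -> A) (H : {set 'I_n})
  (a : 'I_n -> A) (t : btree 'I_n) : A * bool :=
  match t with
  | BLeaf i => (a i, i \in H)
  | BNode t1 t2 =>
      let: (x, m1) := rep_ev vd dl pp H a t1 in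
      let: (y, m2) := rep_ev vd dl pp H a t2 in
      ((if m1 && m2 then pp else if m2 then vd else dl) x y, m1 || m2)
  end.

Definition rep_eval (k : fieldType) (A : lmodType k) (vd dl pp : A -> A -> A)
  (Phi : pl_id k) (H : {set 'I_(pl_n Phi)}) (a : 'I_(pl_n Phi) -> A) : A :=
  \sum_(p <- pl_terms Phi) p.1 *: (rep_ev vd dl pp H a p.2).1.

Arguments id_eval {k A} mul Phi a.
Arguments rep_eval {k A} vd dl pp Phi H a.

(* Main.v *)
Require Import Defs.
From HB Require Import structures.
From mathcomp Require Import all_boot all_algebra.
From mathcomp Require Import boolp.
Set Implicit Arguments. Unset Strict Implicit. Unset Printing Implicit Defensive.
Import GRing.Theory.
Local Open Scope ring_scope.

Section SubAlg.
Variables (k : fieldType) (A : lmodType k) (P : A -> Prop).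
Hypotheses (P0 : P 0) (PD : forall a b, P a -> P b -> P (a + b))
  (PZ : forall (c : k) a, P a -> P (c *: a)).
Definition Pb : pred A := fun a => `[< P a >].
Record subA := SubA { spval : A; sprop : Pb spval }.
HB.instance Definition _ := [isSub for spval].
HB.instance Definition _ := [Choice of subA by <:].
Definition sT : Type := let _ := (P0, PD, PZ) in subA.
HB.instance Definition _ := Choice.copy sT subA.
Lemma PbP a : P a -> Pb a. Proof. by move=> h; apply/asboolP. Qed.
Lemma PPb a : Pb a -> P a. Proof. by move/asboolP. Qed.
Definition szero : sT := SubA (PbP P0).
Definition sadd (x y : sT) : sT := SubA (PbP (PD (PPb (sprop x)) (PPb (sprop y)))).
Definition sscale (c : k) (x : sT) : sT := SubA (PbP (PZ c (PPb (sprop x)))).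
Definition sopp (x : sT) := sscale (-1) x.
Lemma saddA : associative sadd. Proof. by move=> x y z; apply: val_inj; rewrite /= addrA. Qed.
Lemma saddC : commutative sadd. Proof. by move=> x y; apply: val_inj; rewrite /= addrC. Qed.
Lemma sadd0 : left_id szero sadd. Proof. by move=> x; apply: val_inj; rewrite /= add0r. Qed.
Lemma saddN : left_inverse szero sopp sadd. Proof. by move=> x; apply: val_inj; rewrite /= scaleN1r addNr. Qed.
HB.instance Definition _ := GRing.isZmodule.Build sT saddA saddC sadd0 saddN.
Lemma sscaleA a b v : sscale a (sscale b v) = sscale (a * b) v.
Proof. by apply: val_inj; rewrite /= scalerA. Qed.
Lemma sscale1 : left_id 1 sscale. Proof. by move=> x; apply: val_inj; rewrite /= scale1r. Qed.
Lemma sscaleDr : right_distributive sscale +%R. Proof. by move=> a x y; apply: val_inj; rewrite /= scalerDr. Qed.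
Lemma sscaleDl v : {morph sscale^~ v: a b / a + b}. Proof. by move=> a b; apply: val_inj; rewrite /= scalerDl. Qed.
HB.instance Definition _ := GRing.Zmodule_isLmodule.Build k sT sscaleA sscale1 sscaleDr sscaleDl.
Lemma sval_add (x y : sT) : spval (x + y) = spval x + spval y. Proof. by []. Qed.
Lemma sval_scale c (x : sT) : spval (c *: x) = c *: spval x. Proof. by []. Qed.
Lemma sval_zero : spval (0 : sT) = 0. Proof. by []. Qed.
End SubAlg.

Section Bil.
Variables (k : fieldType) (A : lmodType k) (m : A -> A -> A) (Hm : bilinear_mul m).
Lemma bmul0l c : m 0 c = 0.
Proof. by have [_ _ HZ _] := Hm; have := HZ 0 0 c; rewrite !scale0r. Qed.
Lemma bmul0r c : m c 0 = 0.
Proof. by have [_ _ _ HZ] := Hm; have := HZ 0 c 0; rewrite !scale0r. Qed.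
Lemma bmulDl a b c : m (a + b) c = m a c + m b c. Proof. by have [] := Hm. Qed.
Lemma bmulDr a b c : m c (a + b) = m c a + m c b. Proof. by have [] := Hm. Qed.
Lemma bmulZl (x : k) a c : m (x *: a) c = x *: m a c. Proof. by have [] := Hm. Qed.
Lemma bmulZr (x : k) a c : m c (x *: a) = x *: m c a. Proof. by have [] := Hm. Qed.
Lemma bmulNl a c : m (- a) c = - m a c. Proof. by rewrite -scaleN1r bmulZl scaleN1r. Qed.
Lemma bmulNr a c : m c (- a) = - m c a. Proof. by rewrite -scaleN1r bmulZr scaleN1r. Qed.
Lemma bmulBl a b c : m (a - b) c = m a c - m b c. Proof. by rewrite bmulDl bmulNl. Qed.
Lemma bmulBr a b c : m c (a - b) = m c a - m c b. Proof. by rewrite bmulDr bmulNr. Qed.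
Lemma bmul_suml (I : Type) (r : seq I) (F : I -> A) c :
  m (\sum_(i <- r) F i) c = \sum_(i <- r) m (F i) c.
Proof. elim: r => [|x r IH]; first by rewrite !big_nil bmul0l. by rewrite !big_cons bmulDl IH. Qed.
Lemma bmul_sumr (I : Type) (r : seq I) (F : I -> A) c :
  m c (\sum_(i <- r) F i) = \sum_(i <- r) m c (F i).
Proof. elim: r => [|x r IH]; first by rewrite !big_nil bmul0r. by rewrite !big_cons bmulDr IH. Qed.
End Bil.

Section Lin.
Variables (k : fieldType) (A B : lmodType k) (h : A -> B) (Hh : is_lin h).
Lemma lin0 : h 0 = 0.
Proof. have := Hh 1 0 0; rewrite !scale1r addr0 => /(congr1 (fun x => x - h 0)) /=. by rewrite subrr addrK => <-. Qed.
Lemma linD a b : h (a + b) = h a + h b. Proof. by have := Hh 1 a b; rewrite !scale1r. Qed.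
Lemma linZ c a : h (c *: a) = c *: h a. Proof. by have := Hh c a 0; rewrite !addr0 lin0 addr0. Qed.
Lemma linN a : h (- a) = - h a. Proof. by rewrite -scaleN1r linZ scaleN1r. Qed.
Lemma linB a b : h (a - b) = h a - h b. Proof. by rewrite linD linN. Qed.
Lemma lin_sum (I : Type) (r : seq I) (F : I -> A) :
  h (\sum_(i <- r) F i) = \sum_(i <- r) h (F i).
Proof. elim: r => [|x r IH]; first by rewrite !big_nil lin0. by rewrite !big_cons linD IH. Qed.
End Lin.

Lemma hom_tev (k : fieldType) (A B : lmodType k) (mA : A -> A -> A) (mB : B -> B -> B)
  (h : A -> B) (L : Type) (g : L -> A) (t : btree L) :
  is_mult mA mB h -> h (tev mA g t) = tev mB (h \o g) t.
Proof. by move=> Hh; elim: t => [l|t1 IH1 t2 IH2] //=; rewrite Hh IH1 IH2. Qed.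

Lemma tev_eq_leaves (A L : eqType) (m : A -> A -> A) (f g : L -> A) (t : btree L) :
  {in leaves t, f =1 g} -> tev m f t = tev m g t.
Proof.
elim: t => [l|t1 IH1 t2 IH2] /= H; first by apply: H; rewrite inE.
rewrite IH1 ?IH2 // => x Hx; apply: H; by rewrite mem_cat Hx ?orbT.
Qed.
Lemma zid1 (V : zmodType) (A B C D : V) :
  (C - B) + (D - B) + ((A - D) - (C - B)) = A - B.
Proof. by rewrite addrC addrA subrK -addrA addKr. Qed.
Lemma zid2 (V : zmodType) (A B C D : V) :
  (C - B) + (D - B) + ((A - C) - (D - B)) = A - B.
Proof. by rewrite (addrC (C - B)) zid1. Qed.

Section Main.
Variables (k : fieldType) (J : Type) (Phi : J -> pl_id k)
  (X : Type) (F : lmodType k) (mul : F -> F -> F) (gen : X + X -> F).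
Hypothesis Hfree : is_free_var Phi mul gen.

Lemma Hbil : bilinear_mul mul. Proof. by case: Hfree. Qed.
Lemma Hvar : in_var Phi mul. Proof. by case: Hfree. Qed.

Lemma hom_uniq (B : lmodType k) (mB : B -> B -> B) :
  bilinear_mul mB -> in_var Phi mB ->
  forall h1 h2 : F -> B, is_lin h1 -> is_mult mul mB h1 -> is_lin h2 -> is_mult mul mB h2 ->
  (forall y, h1 (gen y) = h2 (gen y)) -> forall a, h1 a = h2 a.
Proof.
move=> Hb Hv h1 h2 l1 m1 l2 m2 e a; have [_ _ U] := Hfree.
have [h [_ _ hg hu]] := U B mB Hb Hv (h1 \o gen).
rewrite (hu h1 l1 m1) // (hu h2 l2 m2) // => y /=; by rewrite e.
Qed.

Definition Pspan := in_span mul gen predT.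

Lemma Pspan0 : Pspan 0. Proof. by exists [::]; rewrite big_nil. Qed.
Lemma PspanD a b : Pspan a -> Pspan b -> Pspan (a + b).
Proof. by move=> [s1 [_ ->]] [s2 [_ ->]]; exists (s1 ++ s2); rewrite big_cat; split => //; exact: all_predT. Qed.
Lemma PspanZ c a : Pspan a -> Pspan (c *: a).
Proof.
move=> [s [_ ->]]; exists [seq (c * p.1, p.2) | p <- s]; split; first exact: all_predT.
by rewrite big_map scaler_sumr; apply: eq_bigr => p _; rewrite scalerA.
Qed.
Lemma PspanM a b : Pspan a -> Pspan b -> Pspan (mul a b).
Proof.
move=> [s1 [_ ->]] [s2 [_ ->]].
exists [seq (p.1 * q.1, BNode p.2 q.2) | p <- s1, q <- s2]; split; first exact: all_predT.
rewrite big_allpairs_dep (bmul_suml Hbil); apply: eq_bigr => p _.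
rewrite (bmul_sumr Hbil); apply: eq_bigr => q _.
by rewrite (bmulZl Hbil) (bmulZr Hbil) scalerA.
Qed.
Lemma Pspan_gen y : Pspan (gen y).
Proof. by exists [:: (1, BLeaf y)]; rewrite big_seq1 scale1r. Qed.

Definition SA := sT Pspan0 PspanD PspanZ.
Definition smul (x y : SA) : SA := SubA (PbP (PspanM (PPb (sprop x)) (PPb (sprop y)))).

Definition sv : SA -> F := @spval _ _ Pspan.
Lemma sval_lin : is_lin sv. Proof. by []. Qed.
Lemma sval_mult : is_mult smul mul sv. Proof. by []. Qed.

Lemma smul_bil : bilinear_mul smul.
Proof.
have [HDl HDr HZl HZr] := Hbil.
by split=> *; apply: val_inj; rewrite /= ?HDl ?HDr ?HZl ?HZr.
Qed.

Lemma smul_var : in_var Phi smul.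
Proof.
move=> j a; apply: (val_inj : injective sv); rewrite /id_eval (lin_sum sval_lin) /= -[RHS](@Hvar j (sv \o a)).
rewrite /id_eval; apply: eq_bigr => p _ /=.
congr (_ *: _); exact: (hom_tev _ _ sval_mult). Qed.


Lemma gen_span a : Pspan a.
Proof.
have [_ _ U] := Hfree.
have [h [hl hm hg _]] := U SA smul smul_bil smul_var (fun y => SubA (PbP (Pspan_gen y))).
have e : forall a, sv (h a) = id a.
  apply: (hom_uniq Hbil Hvar) => //.
  - by move=> c x y; rewrite hl.
  - by move=> x y; rewrite hm.
  - by move=> y; rewrite hg.
rewrite -(e a); exact: PPb (sprop (h a)).
Qed.


Definition Fp := (F * F)%type.
Definition mulD (p q : Fp) : Fp := (mul p.1 q.1, mul p.1 q.2 + mul p.2 q.1).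

Lemma mulD_bil : bilinear_mul mulD.
Proof.
have [HDl HDr HZl HZr] := Hbil.
split=> x y z; rewrite /mulD /=; congr pair;
  rewrite ?HDl ?HDr ?HZl ?HZr ?scalerDr //; by rewrite addrACA.
Qed.

Lemma fst_sum (I : Type) (r : seq I) (f : I -> Fp) : (\sum_(i <- r) f i).1 = \sum_(i <- r) (f i).1.
Proof. by elim: r => [|x r IH]; rewrite ?big_nil ?big_cons //= IH. Qed.
Lemma snd_sum (I : Type) (r : seq I) (f : I -> Fp) : (\sum_(i <- r) f i).2 = \sum_(i <- r) (f i).2.
Proof. by elim: r => [|x r IH]; rewrite ?big_nil ?big_cons //= IH. Qed.

Lemma tevD1 (L : Type) (a : L -> Fp) t : (tev mulD a t).1 = tev mul (fun l => (a l).1) t.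
Proof. by elim: t => [l|t1 IH1 t2 IH2] //=; rewrite IH1 IH2. Qed.

Definition upd (L : eqType) (a : L -> Fp) (i : L) (l : L) := if l == i then (a l).2 else (a l).1.

Lemma tevD2 (L : eqType) (a : L -> Fp) t : uniq (leaves t) ->
  (tev mulD a t).2 = \sum_(i <- leaves t) tev mul (upd a i) t.
Proof.
elim: t => [l|t1 IH1 t2 IH2] /=; first by rewrite big_seq1 /upd eqxx.
rewrite cat_uniq => /and3P [u1 hd u2].
rewrite big_cat /= !tevD1 IH1 // IH2 // addrC (bmul_suml Hbil) (bmul_sumr Hbil).
congr (_ + _); apply: eq_big_seq => i Hi; congr mul; apply: tev_eq_leaves => l Hl;
  rewrite /upd; case: eqP => // e; subst l; move/hasPn: hd => hd;
  first [by have := hd i Hl; rewrite Hi | by have := hd i Hi; rewrite Hl].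
Qed.

Hypothesis Hpl : forall j, polylinear (Phi j).

Lemma eq_big_all (I : Type) (V : zmodType) (P : pred I) (s : seq I) (F1 F2 : I -> V) :
  all P s -> (forall x, P x -> F1 x = F2 x) -> \sum_(i <- s) F1 i = \sum_(i <- s) F2 i.
Proof.
move=> hs he; elim: s hs => [|x s IH]; rewrite ?big_nil ?big_cons //= => /andP [hx hs].
by rewrite he // IH.
Qed.

Lemma mulD_var : in_var Phi mulD.
Proof.
move=> j a.
have h1 : (id_eval mulD (Phi j) a).1 = 0.
  rewrite /id_eval fst_sum -[RHS](@Hvar j (fun l => (a l).1)) /id_eval.
  by apply: eq_bigr => p _ /=; rewrite tevD1.
have h2 : (id_eval mulD (Phi j) a).2 = 0.
  rewrite /id_eval snd_sum.
  transitivity (\sum_(p <- pl_terms (Phi j)) \sum_(i <- enum 'I_(pl_n (Phi j))) p.1 *: tev mul (upd a i) p.2).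
    apply: (eq_big_all (Hpl j)) => p hp /=.
    rewrite tevD2; last by rewrite (perm_uniq hp) enum_uniq.
    by rewrite (perm_big _ hp) scaler_sumr.
  rewrite exchange_big big1 // => i _; exact: Hvar.
by rewrite [LHS]surjective_pairing h1 h2.
Qed.


Variables (phi : F -> F) (E : F -> Fp).
Hypotheses (Hphil : is_lin phi) (Hphim : is_mult mul mul phi)
  (Hphi1 : forall x, phi (gen (inl x)) = gen (inl x))
  (Hphi2 : forall x, phi (gen (inr x)) = gen (inl x)).
Definition Eg (y : X + X) : Fp :=
  match y with inl x => (gen (inl x), 0) | inr x => (0, gen (inr x)) end.
Hypotheses (HEl : is_lin E) (HEm : is_mult mul mulD E) (HEg : forall y, E (gen y) = Eg y).

Definition rho a := (E a).1.
Definition sig a := (E a).2.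
Lemma rho_lin : is_lin rho. Proof. by move=> c a b; rewrite /rho HEl. Qed.
Lemma rho_mult : is_mult mul mul rho. Proof. by move=> a b; rewrite /rho HEm. Qed.
Lemma sig_lin : is_lin sig. Proof. by move=> c a b; rewrite /sig HEl. Qed.
Lemma sig_mul a b : sig (mul a b) = mul (rho a) (sig b) + mul (sig a) (rho b).
Proof. by rewrite /sig /rho HEm. Qed.

Lemma lin_comp (h1 h2 : F -> F) : is_lin h1 -> is_lin h2 -> is_lin (h1 \o h2).
Proof. by move=> l1 l2 c a b /=; rewrite l2 l1. Qed.
Lemma mult_comp (h1 h2 : F -> F) : is_mult mul mul h1 -> is_mult mul mul h2 -> is_mult mul mul (h1 \o h2).
Proof. by move=> l1 l2 a b /=; rewrite l2 l1. Qed.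

Lemma phiphi a : phi (phi a) = phi a.
Proof.
apply: (hom_uniq Hbil Hvar (h1 := phi \o phi)) => //;
  try exact: lin_comp; try exact: mult_comp.
by case=> x /=; rewrite ?Hphi1 ?Hphi2 ?Hphi1.
Qed.
Lemma rhophi a : rho (phi a) = phi a.
Proof.
apply: (hom_uniq Hbil Hvar (h1 := rho \o phi)) => //;
  try exact: lin_comp rho_lin Hphil; try exact: mult_comp rho_mult Hphim.
by case=> x /=; rewrite ?Hphi1 ?Hphi2 /rho HEg.
Qed.
Lemma phirho a : phi (rho a) = rho a.
Proof.
apply: (hom_uniq Hbil Hvar (h1 := phi \o rho)) => //;
  try exact: lin_comp Hphil rho_lin; try exact: mult_comp Hphim rho_mult; try exact: rho_lin; try exact: rho_mult.
by case=> x /=; rewrite /rho HEg /= ?Hphi1 // (lin0 Hphil).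
Qed.
Lemma sigphi a : sig (phi a) = 0.
Proof.
rewrite /sig; have -> : E (phi a) = (phi a, 0).
  apply: (hom_uniq mulD_bil mulD_var (h1 := E \o phi) (h2 := fun a => (phi a, 0))) => //.
  - by move=> c x y /=; rewrite Hphil HEl.
  - by move=> x y /=; rewrite Hphim HEm.
  - by move=> c x y /=; rewrite Hphil; apply: injective_projections => /=; rewrite ?scaler0 ?addr0.
  - by move=> x y /=; rewrite Hphim /mulD /= (bmul0r Hbil) (bmul0l Hbil) addr0.
  - by case=> x /=; rewrite ?Hphi1 ?Hphi2 HEg.
by [].
Qed.

Lemma dot_degN (t1 t2 : btree (X + X)) : dot_deg (BNode t1 t2) = (dot_deg t1 + dot_deg t2)%N.
Proof. by rewrite /dot_deg /= count_cat. Qed.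

Lemma Eform t : E (tev mul gen t) =
  (if dot_deg t == 0%N then tev mul gen t else 0, if dot_deg t == 1%N then tev mul gen t else 0).
Proof.
rewrite (hom_tev _ _ HEm); elim: t => [y|t1 IH1 t2 IH2] /=; first by rewrite HEg; case: y.
rewrite IH1 IH2 dot_degN /mulD /=.
case: (dot_deg t1) => [|[|d1]]; case: (dot_deg t2) => [|[|d2]] /=;
  by rewrite ?(bmul0l Hbil) ?(bmul0r Hbil) ?addr0 ?add0r ?addn0 ?addnS.
Qed.

Lemma rho_tev t : rho (tev mul gen t) = if dot_deg t == 0%N then tev mul gen t else 0.
Proof. by rewrite /rho Eform. Qed.
Lemma sig_tev t : sig (tev mul gen t) = if dot_deg t == 1%N then tev mul gen t else 0.
Proof. by rewrite /sig Eform. Qed.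

Definition V := in_span mul gen (fun t => 0 < dot_deg t)%N.
Definition V2 := in_span mul gen (fun t => dot_deg t == 1)%N.

Lemma rhoV v : V v -> rho v = 0.
Proof.
move=> [s [hs ->]]; rewrite (lin_sum rho_lin).
rewrite (eq_big_all (F2 := fun _ => 0) hs) ?big1 // => p /=.
by rewrite (linZ rho_lin) rho_tev; case: (dot_deg p.2) => // d _; rewrite scaler0.
Qed.
Lemma sigV2 v : V2 v -> sig v = v.
Proof.
move=> [s [hs ->]]; rewrite (lin_sum sig_lin).
apply: (eq_big_all hs) => p /= /eqP hp.
by rewrite (linZ sig_lin) sig_tev hp.
Qed.
Lemma V2V v : V2 v -> V v.
Proof. by move=> [s [hs ->]]; exists s; split => //; apply: sub_all hs => p /= /eqP ->. Qed.

Lemma genV a : V (a - rho a).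
Proof.
have [s [_ ->]] := gen_span a.
exists [seq p <- s | 0 < dot_deg p.2]%N; split; first exact: filter_all.
rewrite big_filter (lin_sum rho_lin) -sumrB [RHS]big_mkcond /=; apply: eq_bigr => p _.
by rewrite (linZ rho_lin) rho_tev; case: (dot_deg p.2) => [|d] /=; rewrite ?subrr ?scaler0 ?subr0.
Qed.
Lemma genV2 a : V2 (sig a).
Proof.
have [s [_ ->]] := gen_span a.
exists [seq p <- s | dot_deg p.2 == 1]%N; split; first exact: filter_all.
rewrite big_filter (lin_sum sig_lin) [RHS]big_mkcond /=; apply: eq_bigr => p _.
by rewrite (linZ sig_lin) sig_tev; case: ifP; rewrite ?scaler0.
Qed.


Fixpoint tmap (L L' : Type) (f : L -> L') (t : btree L) : btree L' :=
  match t with BLeaf l => BLeaf (f l) | BNode t1 t2 => BNode (tmap f t1) (tmap f t2) end.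
Definition untag (y : X + X) : X := match y with inl x => x | inr x => x end.
Definition undot1 (y : X + X) : X + X := inl (untag y).
Fixpoint dl1 (t : btree (X + X)) : btree (X + X) :=
  match t with BLeaf y => BLeaf (inr (untag y)) | BNode t1 t2 => BNode (dl1 t1) (tmap undot1 t2) end.

Lemma phi_tev t : phi (tev mul gen t) = tev mul gen (tmap undot1 t).
Proof. by elim: t => [[x|x]|t1 IH1 t2 IH2] /=; rewrite ?Hphi1 ?Hphi2 // Hphim IH1 IH2. Qed.
Lemma tmap_idem t : tmap undot1 (tmap undot1 t) = tmap undot1 t.
Proof. by elim: t => [[x|x]|t1 IH1 t2 IH2] //=; rewrite IH1 IH2. Qed.
Lemma tmap_dl1 t : tmap undot1 (dl1 t) = tmap undot1 t.
Proof. by elim: t => [[x|x]|t1 IH1 t2 IH2] //=; rewrite IH1 tmap_idem. Qed.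
Lemma deg_undot t : dot_deg (tmap undot1 t) = 0%N.
Proof. by elim: t => [[x|x]|t1 IH1 t2 IH2] //; rewrite /= dot_degN IH1 IH2. Qed.
Lemma deg_dl1 t : dot_deg (dl1 t) = 1%N.
Proof. by elim: t => [[x|x]|t1 IH1 t2 IH2] //; rewrite /= dot_degN IH1 deg_undot. Qed.

Lemma all_true (I : Type) (P : pred I) (s : seq I) : (forall x, P x) -> all P s.
Proof. by move=> h; elim: s => //= x s ->; rewrite h. Qed.

Lemma genU a : exists u, V2 u /\ phi u = phi a.
Proof.
have [s [_ ->]] := gen_span a.
exists (\sum_(p <- s) p.1 *: tev mul gen (dl1 p.2)); split.
  exists [seq (p.1, dl1 p.2) | p <- s]; split; last by rewrite big_map.
  by rewrite all_map; apply: all_true => p /=; rewrite deg_dl1.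
rewrite !(lin_sum Hphil); apply: eq_bigr => p _.
by rewrite !(linZ Hphil) !phi_tev tmap_dl1.
Qed.

Definition vd f g := mul (phi f) g.
Definition dlv f g := mul f (phi g).
Definition Iof (S : F -> Prop) := ideal_gen mul (with_image phi S).

Lemma part_inv S a : Iof S a -> Iof S (phi a).
Proof.
elim=> {a}.
- move=> a [Sa|[s [Ss ->]]]; apply: oi_base; right; first by exists a.
  by exists s; rewrite phiphi.
- by rewrite (lin0 Hphil); apply: oi_zero.
- by move=> a b _ Ha _ Hb; rewrite (linD Hphil); apply: oi_add.
- by move=> c a _ Ha; rewrite (linZ Hphil); apply: oi_scale.
- by move=> o a w -> _ _ Hw; rewrite Hphim; apply: oi_opl.
- by move=> o w a -> _ Hw _; rewrite Hphim; apply: oi_opr.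
Qed.

Lemma phi_ops o a b : tri_ops vd dlv mul o -> phi (o a b) = mul (phi a) (phi b).
Proof. by case=> [->|[->|->]]; rewrite /vd /dlv Hphim ?phiphi. Qed.

Lemma part_ops S o1 o2 : tri_ops vd dlv mul o1 -> tri_ops vd dlv mul o2 ->
  forall a b c, Iof S (vd (o1 a b) c - vd (o2 a b) c) /\ Iof S (dlv a (o1 b c) - dlv a (o2 b c)).
Proof.
move=> h1 h2 a b c; rewrite /vd /dlv !phi_ops // !subrr; split; exact: oi_zero.
Qed.

Lemma rep_lemma n (H : {set 'I_n}) (a : 'I_n -> F) t :
  let b := fun i => if i \in H then a i else phi (a i) in
  let r := rep_ev vd dlv mul H a t in
  r.2 = has (fun i => i \in H) (leaves t) /\ (if r.2 then r.1 = tev mul b t else phi r.1 = tev mul b t).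
Proof.
move=> b; elim: t => [i|t1 IH1 t2 IH2] /=.
  by rewrite orbF /b; case: (i \in H).
move: IH1 IH2; case: (rep_ev vd dlv mul H a t1) => x m1.
case: (rep_ev vd dlv mul H a t2) => y m2 /= [h1 e1] [h2 e2]. 
rewrite has_cat -h1 -h2; split => //.
clear h1 h2; case: m1 e1; case: m2 e2 => /= e2 e1; rewrite /vd /dlv.
- by rewrite e1 e2.
- by rewrite e1 e2.
- by rewrite e1 e2.
- by rewrite Hphim phiphi e1 e2.
Qed.

Lemma part_rep S j (H : {set 'I_(pl_n (Phi j))}) : H != set0 ->
  forall a, Iof S (rep_eval vd dlv mul (Phi j) H a).
Proof.
move=> /set0Pn [i0 Hi0] a.
have -> : rep_eval vd dlv mul (Phi j) H a = 0; last exact: oi_zero.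
rewrite /rep_eval -[RHS](@Hvar j (fun i => if i \in H then a i else phi (a i))) /id_eval.
apply: (eq_big_all (Hpl j)) => p /= hp; congr (_ *: _).
have [h1 h2] := rep_lemma H a p.2.
have hh : has (fun i => i \in H) (leaves p.2).
  by apply/hasP; exists i0 => //; rewrite (perm_mem hp) mem_enum.
by move: h2; rewrite h1 hh.
Qed.


Lemma rhoU a : exists u, V u /\ phi u = rho a.
Proof. by have [u [h e]] := genU (rho a); exists u; split; [exact: V2V | rewrite e phirho]. Qed.

Lemma tri_inv S : (forall s, S s -> V s) -> forall i, Iof S i ->
  let T := op_ideal V (tri_ops vd dlv mul) S in
  T (i - rho i) /\ exists t, T t /\ rho i = phi t.
Proof.
move=> HS i; elim=> {i} /=.
- move=> a [Sa|[s [Ss ->]]].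
    rewrite (rhoV (HS a Sa)) subr0; split; first exact: oi_base.
    by exists 0; split; [exact: oi_zero | rewrite (lin0 Hphil)].
  rewrite rhophi subrr; split; first exact: oi_zero.
  by exists s; split; [exact: oi_base | done].
- rewrite (lin0 rho_lin) subr0; split; first exact: oi_zero.
  by exists 0; split; [exact: oi_zero | rewrite (lin0 Hphil)].
- move=> a b _ [ha [t1 [T1 e1]]] _ [hb [t2 [T2 e2]]].
  rewrite (linD rho_lin); split.
    by rewrite opprD addrACA; apply: oi_add.
  by exists (t1 + t2); split; [apply: oi_add | rewrite (linD Hphil) e1 e2].
- move=> c a _ [ha [t [Tt et]]].
  rewrite (linZ rho_lin); split; first by rewrite -scalerBr; apply: oi_scale.
  by exists (c *: t); split; [apply: oi_scale | rewrite (linZ Hphil) et].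
- move=> o a w -> _ _ [hw [t [Tt et]]].
  have [u [Vu eu]] := rhoU a.
  rewrite rho_mult; split.
    have -> : mul a w - mul (rho a) (rho w) =
      vd u (w - rho w) + dlv (a - rho a) t + mul (a - rho a) (w - rho w).
      rewrite /vd /dlv eu -et (bmulBr Hbil) (bmulBl Hbil) (bmulBl Hbil) (bmulBr Hbil) (bmulBr Hbil).
      by rewrite zid1.
    apply: oi_add; first apply: oi_add.
    + by apply: oi_opl => //; left.
    + by apply: oi_opl => //; [right; left | exact: genV].
    + by apply: oi_opl => //; [right; right | exact: genV].
  exists (dlv u t); split; first by apply: oi_opl => //; right; left.
  by rewrite /dlv Hphim phiphi eu et.
- move=> o w a -> _ [hw [t [Tt et]]] _.
  have [u [Vu eu]] := rhoU a.
  rewrite rho_mult; split.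
    have -> : mul w a - mul (rho w) (rho a) =
      dlv (w - rho w) u + vd t (a - rho a) + mul (w - rho w) (a - rho a).
      rewrite /vd /dlv eu -et (bmulBr Hbil) (bmulBl Hbil) (bmulBl Hbil) (bmulBr Hbil) (bmulBr Hbil).
      by rewrite zid2.
    apply: oi_add; first apply: oi_add.
    + by apply: oi_opr => //; right; left.
    + by apply: oi_opr => //; [left | exact: genV].
    + by apply: oi_opr => //; [right; right | exact: genV].
  exists (vd t u); split; first by apply: oi_opr => //; left.
  by rewrite /vd Hphim phiphi eu et.
Qed.

Lemma di_inv S : (forall s, S s -> V2 s) -> forall i, Iof S i ->
  let T := op_ideal V2 (di_ops vd dlv) S in
  T (sig i) /\ exists t, T t /\ rho i = phi t.
Proof.
move=> HS i; elim=> {i} /=.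
- move=> a [Sa|[s [Ss ->]]].
    rewrite (sigV2 (HS a Sa)) (rhoV (V2V (HS a Sa))); split; first exact: oi_base.
    by exists 0; split; [exact: oi_zero | rewrite (lin0 Hphil)].
  rewrite rhophi sigphi; split; first exact: oi_zero.
  by exists s; split; [exact: oi_base | done].
- rewrite (lin0 rho_lin) (lin0 sig_lin); split; first exact: oi_zero.
  by exists 0; split; [exact: oi_zero | rewrite (lin0 Hphil)].
- move=> a b _ [ha [t1 [T1 e1]]] _ [hb [t2 [T2 e2]]].
  rewrite (linD rho_lin) (linD sig_lin); split; first by apply: oi_add.
  by exists (t1 + t2); split; [apply: oi_add | rewrite (linD Hphil) e1 e2].
- move=> c a _ [ha [t [Tt et]]].
  rewrite (linZ rho_lin) (linZ sig_lin); split; first by apply: oi_scale.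
  by exists (c *: t); split; [apply: oi_scale | rewrite (linZ Hphil) et].
- move=> o a w -> _ _ [hw [t [Tt et]]].
  have [u [Vu eu]] := genU (rho a); rewrite phirho in eu.
  rewrite rho_mult sig_mul; split.
    rewrite -eu et; change (op_ideal V2 (di_ops vd dlv) S (vd u (sig w) + dlv (sig a) t)).
    apply: oi_add.
    + by apply: oi_opl => //; left.
    + by apply: oi_opl => //; [right | exact: genV2].
  exists (dlv u t); split; first by apply: oi_opl => //; right.
  by rewrite /dlv Hphim phiphi eu et.
- move=> o w a -> _ [hw [t [Tt et]]] _.
  have [u [Vu eu]] := genU (rho a); rewrite phirho in eu.
  rewrite rho_mult sig_mul; split.
    rewrite -eu et; change (op_ideal V2 (di_ops vd dlv) S (vd t (sig a) + dlv (sig w) u)).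
    apply: oi_add.
    + by apply: oi_opr => //; [left | exact: genV2].
    + by apply: oi_opr => //; right.
  exists (vd t u); split; first by apply: oi_opr => //; left.
  by rewrite /vd Hphim phiphi eu et.
Qed.

Lemma part_tri S : (forall s, S s -> V s) -> forall v, V v ->
  (Iof S v <-> op_ideal V (tri_ops vd dlv mul) S v).
Proof.
move=> HS v Vv; split.
  by move/(tri_inv HS) => /= [h _]; rewrite (rhoV Vv) subr0 in h.
elim=> {v Vv}.
- by move=> a Sa; apply: oi_base; left.
- exact: oi_zero.
- by move=> a b _ ? _ ?; apply: oi_add.
- by move=> c a _ ?; apply: oi_scale.
- move=> o a w [->|[->|->]] _ _ Hw; rewrite /vd /dlv.
  + exact: oi_opl.
  + by apply: oi_opl => //; apply: part_inv.
  + exact: oi_opl.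
- move=> o w a [->|[->|->]] _ Hw _; rewrite /vd /dlv.
  + by apply: oi_opr => //; apply: part_inv.
  + exact: oi_opr.
  + exact: oi_opr.
Qed.

Lemma part_di S : (forall s, S s -> V2 s) -> forall v, V2 v ->
  (Iof S v <-> op_ideal V2 (di_ops vd dlv) S v).
Proof.
move=> HS v Vv; split.
  by move/(di_inv HS) => /= [h _]; rewrite (sigV2 Vv) in h.
elim=> {v Vv}.
- by move=> a Sa; apply: oi_base; left.
- exact: oi_zero.
- by move=> a b _ ? _ ?; apply: oi_add.
- by move=> c a _ ?; apply: oi_scale.
- move=> o a w [->|->] _ _ Hw; rewrite /vd /dlv.
  + exact: oi_opl.
  + by apply: oi_opl => //; apply: part_inv.
- move=> o w a [->|->] _ Hw _; rewrite /vd /dlv.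
  + by apply: oi_opr => //; apply: part_inv.
  + exact: oi_opr.
Qed.

End Main.

Unset Implicit Arguments.

Theorem corollary4p3 (k : fieldType) (J : Type) (Phi : J -> pl_id k)
  (X : Type) (F : lmodType k) (mul : F -> F -> F) (gen : X + X -> F)
  (phi : F -> F) :
  (forall j, polylinear (Phi j)) ->
  is_free_var Phi mul gen ->
  is_lin phi -> is_mult mul mul phi ->
  (forall x, phi (gen (inl x)) = gen (inl x)) ->
  (forall x, phi (gen (inr x)) = gen (inl x)) ->
  let vdash := fun f g => mul (phi f) g in
  let dashv := fun f g => mul f (phi g) in
  let V := in_span mul gen (fun t => 0 < dot_deg t)%N in
  let V2 := in_span mul gen (fun t => dot_deg t == 1)%N in
  (forall S : F -> Prop, (forall s, S s -> V s) ->
     let I := ideal_gen mul (with_image phi S) in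
     [/\ (forall a, I a -> I (phi a)),
         (forall o1 o2, tri_ops vdash dashv mul o1 -> tri_ops vdash dashv mul o2 ->
            forall a b c, I (vdash (o1 a b) c - vdash (o2 a b) c) /\
                          I (dashv a (o1 b c) - dashv a (o2 b c))),
         (forall j (H : {set 'I_(pl_n (Phi j))}), H != set0 ->
            forall a, I (rep_eval vdash dashv mul (Phi j) H a)) &
         (forall v, V v -> (I v <-> op_ideal V (tri_ops vdash dashv mul) S v))])
  /\
  (forall S : F -> Prop, (forall s, S s -> V2 s) ->
     let I := ideal_gen mul (with_image phi S) in
     (forall a, I a -> I (phi a)) /\
     (forall v, V2 v -> (I v <-> op_ideal V2 (di_ops vdash dashv) S v))).
Proof.
move=> Hpl Hfree Hphil Hphim Hphi1 Hphi2 vdash dashv V' V2'.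
have [_ _ U] := Hfree.
have [E [HEl HEm HEg _]] := U _ (mulD mul) (mulD_bil Hfree) (mulD_var Hfree Hpl) (Eg gen).
split=> S HS I.
  split.
  - exact: (part_inv Hfree Hphil Hphim Hphi1 Hphi2).
  - exact: (part_ops Hfree Hphil Hphim Hphi1 Hphi2).
  - exact: (part_rep Hfree Hpl Hphil Hphim Hphi1 Hphi2).
  - exact: (part_tri Hfree Hphil Hphim Hphi1 Hphi2 HEl HEm HEg HS).
split.
- exact: (part_inv Hfree Hphil Hphim Hphi1 Hphi2).
- exact: (part_di Hfree Hpl Hphil Hphim Hphi1 Hphi2 HEl HEm HEg HS).
Qed.
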